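(* Let $t\ge 2$ be a real number. Every poset $\mathbf{P}$ that has an interval representation in which every interval has length in $[1,t]$ satisfies $\dim(\mathbf{P})\le 2\lceil\lg\lg t\rceil+4$; that is, $f(C[1,t])\le 2\lceil\lg\lg t\rceil+4$.
   Context: $\lg$ denotes the logarithm of base $2$. An interval representation of a poset $(X,P)$ assigns to each $x\in X$ a closed real interval $[l_x,r_x]$ such that $x<y$ in $P$ iff $r_x<l_y$; the length is $r_x-l_x$. $C[\alpha,\beta]$ is the class of posets having an interval representation with all lengths in $[\alpha,\beta]$, and $f(C[\alpha,\beta])$ is the least upper bound of the dimensions of posets in $C[\alpha,\beta]$. The dimension of a poset is the minimum number of linear extensions whose intersection is the partial order. *)

(* Defs.v *)
From Stdlib Require Import Reals ZArith.
Open Scope R_scope.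

Definition lg (x : R) : R := ln x / ln 2.

(* ceiling: the least integer >= x.  (up y is the unique integer with y < up y <= y+1) *)
Definition ceilR (x : R) : Z := (1 - up (- x))%Z.

Definition interval_rep_in {X : Type} (P : X -> X -> Prop) (a b : R)
  (l r : X -> R) : Prop :=
  (forall x, l x <= r x) /\
  (forall x, a <= r x - l x <= b) /\
  (forall x y, P x y <-> r x < l y).

Definition linear_extension {X : Type} (P L : X -> X -> Prop) : Prop :=
  (forall x, ~ L x x) /\
  (forall x y z, L x y -> L y z -> L x z) /\
  (forall x y, x <> y -> L x y \/ L y x) /\
  (forall x y, P x y -> L x y).

Definition dim_le {X : Type} (P : X -> X -> Prop) (k : nat) : Prop :=
  exists L : nat -> X -> X -> Prop,
    (forall i, (i < k)%nat -> linear_extension P (L i)) /\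
    (forall x y, P x y <-> (forall i, (i < k)%nat -> L i x y)).

(* Main.v *)
Require Import Defs.
From Stdlib Require Import Reals ZArith.
Open Scope R_scope.
From mathcomp Require ssreflect ssrfun ssrbool eqtype ssrnat seq boolp wochoice.
Module WO.
Import ssreflect ssrfun ssrbool eqtype ssrnat seq boolp wochoice.
Lemma total_order_exists (X : Type) : exists W : X -> X -> Prop,
  (forall x, ~ W x x) /\ (forall x y z, W x y -> W y z -> W x z) /\
  (forall x y, x <> y -> W x y \/ W y x).
Proof.
have [R wR] := well_ordering_principle {classic X}.
have wc : wo_chain R (fun _ : {classic X} => true) by apply: withinW.
have tot : forall x y : {classic X}, R x y || R y x.
  by move=> x y; apply: (wo_chainW wc).
have anti : forall x y : {classic X}, R x y -> R y x -> x = y.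
  by move=> x y h1 h2; apply: (wo_chain_antisymmetric wc) => //; rewrite h1 h2.
have trans : forall x y z : {classic X}, R x y -> R y z -> R x z.
  move=> x y z Rxy Ryz.
  have ne : nonempty [mem [:: x; y; z] : seq {classic X}].
    by exists x; rewrite inE eqxx.
  have [m [[mA lb] _]] := wR _ ne.
  move: mA; rewrite !inE => /or3P[] /eqP Em; subst m.
  - by apply: lb; rewrite !inE eqxx !orbT.
  - have Ryx : R y x by apply: lb; rewrite !inE eqxx.
    by rewrite (anti _ _ Rxy Ryx).
  - have Rzy : R z y by apply: lb; rewrite !inE eqxx !orbT.
    by rewrite -(anti _ _ Ryz Rzy).
exists (fun x y : X => R x y /\ x <> y); split; [|split].
- by move=> x [].
- move=> x y z [Rxy nxy] [Ryz nyz]; split; first exact: trans Rxy Ryz.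
  move=> Exz; subst z; apply: nxy; exact: anti.
- move=> x y nxy; have := tot x y; case/orP=> h; [left|right]; split=> //.
  by move=> E; apply: nxy.
Qed.

End WO.
From Stdlib Require Import Lia Lra Classical.

Definition ext {X : Type} (l r g : X -> R) (T : X -> X -> Prop) (a b : X) : Prop :=
  g a < g b \/ (g a = g b /\ (l b < l a \/ (l b = l a /\
    (r b < r a \/ (r b = r a /\ T a b))))).

Lemma ext_lin {X : Type} (P : X -> X -> Prop) (l r g : X -> R) (T : X -> X -> Prop)
  (Tirr : forall x, ~ T x x) (Ttr : forall x y z, T x y -> T y z -> T x z)
  (Ttot : forall x y, x <> y -> T x y \/ T y x)
  (hP : forall x y, P x y -> r x < l y) (hg : forall x, l x <= g x <= r x) :
  linear_extension P (ext l r g T).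
Proof.
  unfold ext; split; [|split; [|split]].
  - intros x H. destruct H as [H|[_ [H|[_ [H|[_ H]]]]]]; try lra. exact (Tirr x H).
  - intros x y z H1 H2.
    destruct H1 as [H1|[E1 [H1|[E1' [H1|[E1'' H1]]]]]];
    destruct H2 as [H2|[E2 [H2|[E2' [H2|[E2'' H2]]]]]];
    first [ left; lra
          | right; split; [lra|]; first
            [ left; lra
            | right; split; [lra|]; first
              [ left; lra
              | right; split; [lra| eauto ] ] ] ].
  - intros x y nxy.
    destruct (total_order_T (g x) (g y)) as [[H|H]|H]; [left; left; exact H| |right; left; lra].
    destruct (total_order_T (l x) (l y)) as [[H'|H']|H'];
      [right; right; split; [lra|left; lra]| |left; right; split; [lra|left; lra]].
    destruct (total_order_T (r x) (r y)) as [[H''|H'']|H''];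
      [right; right; split; [lra|right; split; [lra|left; lra]]| |
       left; right; split; [lra|right; split; [lra|left; lra]]].
    destruct (Ttot x y nxy) as [Ht|Ht];
      [left; right; split; [lra|right; split; [lra|right; split; [lra|exact Ht]]]|
       right; right; split; [lra|right; split; [lra|right; split; [lra|exact Ht]]]].
  - intros x y H. left. specialize (hP x y H). pose proof (hg x); pose proof (hg y). lra.
Qed.

Fixpoint cls (n : nat) (v : R) : nat :=
  match n with
  | O => O
  | S m => if Rle_dec (2 ^ S m) v then S m else cls m v
  end.

Lemma cls_le n v : (cls n v <= n)%nat.
Proof. induction n; simpl; [lia|]. destruct (Rle_dec _ _); lia. Qed.

Lemma cls_low n v : 1 <= v -> 2 ^ cls n v <= v.
Proof. intros h; induction n; simpl; [lra|]. destruct (Rle_dec _ _); auto. Qed.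

Lemma cls_high n v : v <= 2 ^ S n -> v <= 2 ^ S (cls n v).
Proof.
  induction n; intros h; simpl in *; [lra|].
  destruct (Rle_dec _ _) as [h'|h']; [simpl; exact h|].
  apply IHn. simpl. lra.
Qed.

Lemma ln_le' x y : 0 < x -> x <= y -> ln x <= ln y.
Proof. intros hx [h|h]; [left; apply ln_increasing; auto| subst; lra]. Qed.

Lemma le_of_ln x y : 0 < x -> 0 < y -> ln x <= ln y -> x <= y.
Proof.
  intros hx hy h. destruct (Rle_or_lt x y) as [H|H]; auto.
  pose proof (ln_increasing y x hy H). lra.
Qed.

Lemma bits_diff a b K : a <> b -> (a < 2 ^ K)%nat -> (b < 2 ^ K)%nat ->
  exists i, (i < K)%nat /\ Nat.testbit a i <> Nat.testbit b i.
Proof.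
  intros nab ha hb.
  assert (above : forall c i, (c < 2 ^ K)%nat -> (K <= i)%nat -> Nat.testbit c i = false).
  { intros c i hc hi. destruct c as [|c]. apply Nat.bits_0.
    apply Nat.bits_above_log2. apply (Nat.log2_lt_pow2 (S c) K) in hc; lia. }
  apply NNPP; intros Hn. apply nab. apply Nat.bits_inj. intros i.
  destruct (Nat.lt_ge_cases i K) as [hi|hi].
  - destruct (Bool.bool_dec (Nat.testbit a i) (Nat.testbit b i)) as [e|e]; auto.
    exfalso; apply Hn; exists i; auto.
  - rewrite !above; auto.
Qed.

Lemma K_bound (t : R) (ht : 2 <= t) :
  exists Kn : nat, Z.of_nat Kn = ceilR (lg (lg t)) /\ t <= 2 ^ (2 ^ Kn)%nat.
Proof.
  assert (l2 : 0 < ln 2) by (rewrite <- ln_1; apply ln_increasing; lra).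
  assert (lt1 : 1 <= lg t).
  { unfold lg. apply (Rmult_le_reg_r (ln 2)); auto. unfold Rdiv.
    rewrite Rmult_assoc, Rinv_l by lra. rewrite Rmult_1_l, Rmult_1_r. apply ln_le'; lra. }
  assert (llt0 : 0 <= lg (lg t)).
  { unfold lg at 1. unfold Rdiv. apply Rmult_le_pos; [|left; apply Rinv_0_lt_compat; auto].
    rewrite <- ln_1. apply ln_le'; lra. }
  set (K := ceilR (lg (lg t))).
  assert (hc : lg (lg t) <= IZR K).
  { unfold K, ceilR. destruct (archimed (- lg (lg t))) as [h1 h2]. rewrite minus_IZR. simpl. lra. }
  assert (K0 : (0 <= K)%Z) by (apply le_IZR; lra).
  exists (Z.to_nat K). split; [apply Z2Nat.id; auto|].
  assert (eK : INR (Z.to_nat K) = IZR K) by (rewrite INR_IZR_INZ, Z2Nat.id; auto).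
  assert (h1 : lg t <= 2 ^ Z.to_nat K).
  { apply le_of_ln; [lra|apply pow_lt; lra|]. rewrite ln_pow by lra. rewrite eK.
    unfold lg in hc at 1. unfold Rdiv in hc.
    apply (Rmult_le_compat_r (ln 2)) in hc; [|lra].
    rewrite Rmult_assoc, Rinv_l, Rmult_1_r in hc by lra. exact hc. }
  apply le_of_ln; [lra|apply pow_lt; lra|]. rewrite ln_pow by lra.
  rewrite pow_INR. simpl (INR 2).
  unfold lg in h1. unfold Rdiv in h1.
  apply (Rmult_le_compat_r (ln 2)) in h1; [|lra].
  rewrite Rmult_assoc, Rinv_l, Rmult_1_r in h1 by lra. replace (1+1) with 2 by lra. exact h1.
Qed.

Definition total_order_exists := WO.total_order_exists.

Theorem theorem7p3 (t : R) (ht : 2 <= t) (X : Type) (P : X -> X -> Prop)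
  (l r : X -> R) (hrep : interval_rep_in P 1 t l r) :
  exists k : nat, (Z.of_nat k <= 2 * ceilR (lg (lg t)) + 4)%Z /\ dim_le P k.
Proof.
  destruct hrep as [hlr [hlen hP]].
  destruct (K_bound t ht) as [Kn [eK htN]].
  destruct (total_order_exists X) as [W [Wirr [Wtr Wtot]]].
  pose (N := (2 ^ Kn)%nat).
  assert (N1 : (1 <= N)%nat) by (unfold N; pose proof (Nat.pow_nonzero 2 Kn); lia).
  pose (j := fun x => cls (N - 1) (r x - l x)).
  assert (jlt : forall x, (j x < 2 ^ Kn)%nat).
  { intros x; unfold j; pose proof (cls_le (N-1) (r x - l x)); fold N; lia. }
  pose (sg := fun x => 2 ^ j x).
  assert (sg1 : forall x, 1 <= sg x) by (intros; unfold sg; apply pow_R1_Rle; lra).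
  assert (sglen : forall x, sg x <= r x - l x <= 2 * sg x).
  { intros x; pose proof (hlen x); split.
    - apply cls_low; lra.
    - change (2 * sg x) with (2 ^ S (j x)). apply cls_high.
      replace (S (N - 1)) with N by lia. unfold N. lra. }
  pose (k := fun x => Int_part (l x / sg x)).
  assert (kb : forall x, IZR (k x) * sg x <= l x < (IZR (k x) + 1) * sg x).
  { intros x. destruct (base_Int_part (l x / sg x)) as [h1 h2]. fold (k x) in h1, h2.
    pose proof (sg1 x).
    assert (e : l x = (l x / sg x) * sg x) by (field; lra).
    set (v := l x / sg x) in *. set (kk := IZR (k x)) in *. set (ss := sg x) in *.
    rewrite e. split.
    - apply Rmult_le_compat_r; lra.
    - apply Rmult_lt_compat_r; lra. }
  pose (gB := fun x => (IZR (k x) + 1) * sg x).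
  pose (gS := fun (s : Z) x => if Z.eqb (k x mod 3) s then r x else l x).
  pose (gR := fun (b : nat) (s : bool) x => if Bool.eqb (Nat.testbit (j x) b) s then r x else l x).
  pose (Wr := fun a b => W b a).
  pose (Lf := fun i => match i with
      | O => ext l r gB Wr
      | S O => ext l r (gS 0%Z) W
      | S (S O) => ext l r (gS 1%Z) W
      | S (S (S O)) => ext l r (gS 2%Z) W
      | S (S (S (S m))) => ext l r (gR (Nat.div2 m) (Nat.odd m)) W end).
  assert (hP' : forall x y, P x y -> r x < l y) by (intros; apply hP; auto).
  assert (vS : forall s x, l x <= gS s x <= r x).
  { intros s x; unfold gS; destruct (Z.eqb _ _); pose proof (hlr x); lra. }
  assert (vR : forall b s x, l x <= gR b s x <= r x).
  { intros b s x; unfold gR; destruct (Bool.eqb _ _); pose proof (hlr x); lra. }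
  assert (vB : forall x, l x <= gB x <= r x).
  { intros x; unfold gB; pose proof (kb x); pose proof (sglen x); lra. }
  assert (Lext : forall i, linear_extension P (Lf i)).
  { intros i; destruct i as [|[|[|[|m]]]]; simpl; apply ext_lin; auto; unfold Wr;
    first [ intros x h; exact (Wirr x h)
          | intros x y z h1 h2; exact (Wtr _ _ _ h2 h1)
          | intros x y h; destruct (Wtot x y h); auto ]. }
  exists (2 * Kn + 4)%nat. split; [rewrite <- eK; lia|].
  exists Lf. split; [intros; apply Lext|].
  intros x y. split.
  { intros Pxy i _. destruct (Lext i) as [_ [_ [_ e]]]. apply e; exact Pxy. }
  intros Hall.
  destruct (classic (P x y)) as [Pxy|nPxy]; auto. exfalso.
  assert (asym : forall i a b, Lf i a b -> Lf i b a -> False).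
  { intros i a b h1 h2; destruct (Lext i) as [irr [tr _]]; exact (irr a (tr _ _ _ h1 h2)). }
  assert (LS : forall s, (0 <= s < 3)%Z -> Lf (S (Z.to_nat s)) = ext l r (gS s) W).
  { intros s hs. assert (s = 0 \/ s = 1 \/ s = 2)%Z as H by lia.
    destruct H as [H|[H|H]]; subst s; reflexivity. }
  assert (key : exists i, (i < 2 * Kn + 4)%nat /\ Lf i y x).
  { destruct (classic (x = y)) as [exy|nxy].
    { subst y. exfalso. destruct (Lext 0%nat) as [irr _]. apply (irr x). apply Hall; lia. }
    destruct (classic (P y x)) as [Pyx|nPyx].
    { exists 0%nat; split; [lia|]. destruct (Lext 0%nat) as [_ [_ [_ e]]]. apply e; auto. }
    assert (i1 : l y <= r x) by (apply Rnot_lt_le; intro h; apply nPxy, hP; auto).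
    assert (i2 : l x <= r y) by (apply Rnot_lt_le; intro h; apply nPyx, hP; auto).
    pose proof (hlen x) as hx. pose proof (hlen y) as hy.
    pose proof (kb x) as kbx. pose proof (kb y) as kby.
    pose proof (sglen x) as sx. pose proof (sglen y) as sy.
    pose proof (sg1 x) as s1x.
    destruct (Nat.eq_dec (j x) (j y)) as [ej|nej].
    - assert (sgeq : sg y = sg x) by (unfold sg; rewrite ej; reflexivity).
      rewrite sgeq in kby, sy.
      destruct (Z.lt_trichotomy (k y) (k x)) as [kl|[ke|kg]].
      + exists 0%nat; split; [lia|]. simpl. left. unfold gB. rewrite sgeq.
        assert (IZR (k y) + 1 <= IZR (k x)) by (rewrite <- plus_IZR; apply IZR_le; lia).
        nra.
      + assert (gBe : gB y = gB x) by (unfold gB; rewrite ke, sgeq; reflexivity).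
        destruct (Rlt_or_le (l y) (l x)) as [hl|hl].
        * pose (s := ((k x + 1) mod 3)%Z).
          assert (hs : (0 <= s < 3)%Z) by (unfold s; apply Z.mod_pos_bound; lia).
          exists (S (Z.to_nat s)); split; [lia|]. rewrite (LS s hs).
          unfold ext, gS.
          assert (ne1 : Z.eqb (k x mod 3) s = false) by (apply Z.eqb_neq; unfold s; Z.div_mod_to_equations; lia).
          assert (ne2 : Z.eqb (k y mod 3) s = false) by (apply Z.eqb_neq; unfold s; rewrite ke; Z.div_mod_to_equations; lia).
          rewrite ne1, ne2. left; exact hl.
        * destruct (Rlt_or_le (r y) (r x)) as [hr|hr].
          -- pose (s := (k x mod 3)%Z).
             assert (hs : (0 <= s < 3)%Z) by (unfold s; apply Z.mod_pos_bound; lia).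
             exists (S (Z.to_nat s)); split; [lia|]. rewrite (LS s hs).
             unfold ext, gS.
             assert (e1 : Z.eqb (k x mod 3) s = true) by (apply Z.eqb_eq; reflexivity).
             assert (e2 : Z.eqb (k y mod 3) s = true) by (apply Z.eqb_eq; unfold s; rewrite ke; reflexivity).
             rewrite e1, e2. left; exact hr.
          -- destruct (Rlt_or_le (l x) (l y)) as [hl'|hl'].
             { exists 0%nat; split; [lia|]. simpl. right. split; [exact gBe|]. left; exact hl'. }
             destruct (Rlt_or_le (r x) (r y)) as [hr'|hr'].
             { exists 0%nat; split; [lia|]. simpl. right. split; [exact gBe|]. right; split; [lra|].
               left; exact hr'. }
             destruct (Wtot x y nxy) as [wxy|wyx].
             { exists 0%nat; split; [lia|]. simpl. right. split; [exact gBe|]. right; split; [lra|].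
               right; split; [lra|]. exact wxy. }
             { exists 1%nat; split; [lia|]. simpl. right. split.
               { unfold gS. rewrite ke. destruct (Z.eqb _ _); lra. }
               right; split; [lra|]. right; split; [lra|]. exact wyx. }
      + assert (kle : (k y <= k x + 2)%Z).
        { apply Z.nlt_ge; intro h. assert (IZR (k x) + 3 <= IZR (k y)).
          { rewrite <- (plus_IZR (k x) 3). apply IZR_le; lia. }
          nra. }
        pose (s := (k x mod 3)%Z).
        assert (hs : (0 <= s < 3)%Z) by (unfold s; apply Z.mod_pos_bound; lia).
        exists (S (Z.to_nat s)); split; [lia|]. rewrite (LS s hs).
        unfold ext, gS.
        assert (e1 : Z.eqb (k x mod 3) s = true) by (apply Z.eqb_eq; reflexivity).
        assert (e2 : Z.eqb (k y mod 3) s = false) by (apply Z.eqb_neq; unfold s; Z.div_mod_to_equations; lia).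
        rewrite e1, e2.
        destruct (Rlt_or_le (l y) (r x)) as [h|h]; [left; exact h|].
        right; split; [lra|]. left; lra.
    - destruct (bits_diff (j x) (j y) Kn nej (jlt x) (jlt y)) as [b [hb hbits]].
      pose (s := Nat.testbit (j x) b).
      pose (m := (2 * b + (if s then 1 else 0))%nat).
      assert (hm : Nat.div2 m = b /\ Nat.odd m = s).
      { unfold m; destruct s.
        - split; [apply Nat.div2_odd'|apply Nat.odd_odd].
        - rewrite Nat.add_0_r. split; [apply Nat.div2_double|apply Nat.odd_even]. }
      exists (4 + m)%nat. split; [unfold m; destruct s; lia|].
      change (Lf (4 + m)%nat) with (ext l r (gR (Nat.div2 m) (Nat.odd m)) W).
      destruct hm as [hm1 hm2]. rewrite hm1, hm2.
      unfold ext, gR.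
      assert (e1 : Bool.eqb (Nat.testbit (j x) b) s = true) by (apply Bool.eqb_true_iff; reflexivity).
      assert (e2 : Bool.eqb (Nat.testbit (j y) b) s = false).
      { apply Bool.eqb_false_iff. unfold s. intro h; apply hbits; auto. }
      rewrite e1, e2.
      destruct (Rlt_or_le (l y) (r x)) as [h|h]; [left; exact h|].
      right; split; [lra|]. left; lra. }
  destruct key as [i [hi Hyx]]. exact (asym i x y (Hall i hi) Hyx).
Qed.
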